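(* Let $n\ge 7$ and let $CU_n$ be the set of chemical unicyclic graphs on $n$ vertices. Define the following subsets of $CU_n$ (in each, all $m_{i,j}$ not listed are $0$): $\alpha_1$: $n_2=n$ (all vertices of degree 2) and $m_{2,2}=n$; $\alpha_2$: $n_4=0,n_3=1,n_2=n-2,n_1=1$, $m_{1,3}=1$, $m_{2,3}=2$, $m_{2,2}=n-3$; $\alpha_3$: $n_4=0,n_3=1,n_2=n-2,n_1=1$, $m_{1,2}=1$, $m_{2,3}=3$, $m_{2,2}=n-4$; $\alpha_9$: $n_4=0,n_3=2,n_2=n-4,n_1=2$, $m_{1,2}=2$, $m_{2,3}=4$, $m_{3,3}=1$, $m_{2,2}=n-7$. Let $G_1\in\alpha_1$, $G_2\in\alpha_3$, $G_3\in\alpha_2$, $G_4\in\alpha_9$, and let $G\in CU_n$ not belong to $\alpha_1\cup\alpha_2\cup\alpha_3\cup\alpha_9$. Then $SO(G_1)<SO(G_2)<SO(G_3)<SO(G_4)<SO(G)$.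
   Context: All graphs are simple and connected. A chemical graph is a graph with maximum degree at most $4$; a unicyclic graph is a connected graph with $n$ vertices and $n$ edges. $d_G(u)$ is the degree of $u$, $n_i$ the number of vertices of degree $i$, and $m_{i,j}$ the number of edges joining a vertex of degree $i$ to a vertex of degree $j$. The Sombor index is $SO(G)=\sum_{uv\in E(G)}\sqrt{d_G(u)^2+d_G(v)^2}$. *)

(* Defs.v *)
From mathcomp Require Import all_boot all_order all_algebra.
From mathcomp Require Import reals.
Set Implicit Arguments. Unset Strict Implicit. Unset Printing Implicit Defensive.
Import Order.TTheory GRing.Theory Num.Theory.

Section Graphs.
Variable n : nat.
Implicit Type e : rel 'I_n.

Definition simple_graph e := symmetric e /\ irreflexive e.
Definition connected_graph e := forall x y : 'I_n, connect e x y.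

Definition deg e (u : 'I_n) : nat := #|[set v | e u v]|.

(* edge set: unordered pairs represented as ordered pairs u < v *)
Definition edges e : {set 'I_n * 'I_n} := [set p : 'I_n * 'I_n | (p.1 < p.2)%N && e p.1 p.2].
Definition nedges e : nat := #|edges e|.

Definition nv e (i : nat) : nat := #|[set u | deg e u == i]|.

Definition medges e (i j : nat) : nat :=
  #|[set p in edges e | ((deg e p.1 == i) && (deg e p.2 == j))
                      || ((deg e p.1 == j) && (deg e p.2 == i))]|.

Definition max_deg_le4 e := forall u, (deg e u <= 4)%N.

Definition chem_unicyclic e :=
  [/\ simple_graph e, connected_graph e, nedges e = n & max_deg_le4 e].

Definition sombor (R : realType) e : R :=
  \sum_(p in edges e) Num.sqrt (((deg e p.1) ^ 2 + (deg e p.2) ^ 2)%N%:R).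

Definition alpha1 e :=
  nv e 2 = n /\
  forall i j, (i <= j)%N -> medges e i j = if (i, j) == (2, 2) then n else 0.

Definition alpha2 e :=
  [/\ nv e 4 = 0, nv e 3 = 1, nv e 2 = n - 2, nv e 1 = 1 &
  forall i j, (i <= j)%N -> medges e i j =
    if (i, j) == (1, 3) then 1 else if (i, j) == (2, 3) then 2
    else if (i, j) == (2, 2) then n - 3 else 0].

Definition alpha3 e :=
  [/\ nv e 4 = 0, nv e 3 = 1, nv e 2 = n - 2, nv e 1 = 1 &
  forall i j, (i <= j)%N -> medges e i j =
    if (i, j) == (1, 2) then 1 else if (i, j) == (2, 3) then 3
    else if (i, j) == (2, 2) then n - 4 else 0].

Definition alpha9 e :=
  [/\ nv e 4 = 0, nv e 3 = 2, nv e 2 = n - 4, nv e 1 = 2 &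
  forall i j, (i <= j)%N -> medges e i j =
    if (i, j) == (1, 2) then 2 else if (i, j) == (2, 3) then 4
    else if (i, j) == (3, 3) then 1
    else if (i, j) == (2, 2) then n - 7 else 0].

End Graphs.

(* Main.v *)
Require Import Defs.
From mathcomp Require Import all_boot all_order all_algebra.
From mathcomp Require Import reals.
From mathcomp Require Import ring lra zify.
Import Order.TTheory GRing.Theory Num.Theory.
Set Implicit Arguments. Unset Strict Implicit. Unset Printing Implicit Defensive.

Lemma card_setP (T : finType) (P : pred T) : #|[set x | P x]| = \sum_x (P x : nat).
Proof.
rewrite -sum1_card big_mkcond /=; apply: eq_bigr => x _; rewrite inE; by case: (P x).
Qed.

Lemma card_setinP (T : finType) (A : {set T}) (P : pred T) :
  #|[set x in A | P x]| = \sum_(x in A) (P x : nat).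
Proof.
rewrite -sum1_card big_mkcond /= [RHS]big_mkcond /=; apply: eq_bigr => x _; rewrite !inE.
by case: (x \in A); case: (P x).
Qed.

Lemma card2_le (T : finType) (S : {set T}) x y :
  x \in S -> y \in S -> x != y -> (2 <= #|S|)%N.
Proof.
move=> hx hy hxy; have := subset_leq_card (A := [set x; y]) (B := S).
rewrite cards2 hxy; apply; apply/subsetP => z; rewrite !inE => /orP [] /eqP ->//.
Qed.

Lemma card3_le (T : finType) (S : {set T}) x y z :
  x \in S -> y \in S -> z \in S -> x != y -> z != x -> z != y -> (3 <= #|S|)%N.
Proof.
move=> hx hy hz hxy hzx hzy; have := subset_leq_card (A := z |: [set x; y]) (B := S).
rewrite cardsU1 cards2 hxy !inE negb_or hzx hzy; apply.
apply/subsetP => w; rewrite !inE => /orP [/eqP ->|/orP [] /eqP ->] //.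
Qed.

Definition cls (i j a b : nat) := ((a == i) && (b == j)) || ((a == j) && (b == i)).

Section Comb.
Variable n : nat.
Variable e : rel 'I_n.
Hypothesis He : chem_unicyclic e.
Hypothesis Hn : (3 <= n)%N.
Local Notation D := (deg e).
Local Notation E := (edges e).

Lemma medgesE i j : medges e i j = \sum_(p in E) (cls i j (D p.1) (D p.2) : nat).
Proof. by rewrite /medges card_setinP. Qed.

Lemma deg_le4 u : (D u <= 4)%N.
Proof. by case: He => _ _ _; apply. Qed.

Lemma deg_gt0 u : (0 < D u)%N.
Proof.
case: He => [[sym irr] conn _ _].
rewrite lt0n; apply/negP => /eqP H0.
have [w hw] : exists w : 'I_n, w != u.
  have h0 : (0 < n)%N by lia.
  have h1 : (1 < n)%N by lia.
  case: (u =P Ordinal h0) => [->|/eqP hu]; last by exists (Ordinal h0); rewrite eq_sym.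
  by exists (Ordinal h1).
have := conn u w; case/connectP => [[|x p]] /=.
  by move=> _ hwu; rewrite hwu eqxx in hw.
case/andP => hux _ _.
have : (0 < #|[set v | e u v]|)%N by apply/card_gt0P; exists x; rewrite inE.
by rewrite /deg in H0; rewrite H0.
Qed.

Definition m i j := medges e i j.

Lemma sum_cls_nat (F : nat -> nat -> nat) : (forall a b, F a b = F b a) ->
  \sum_(p in E) F (D p.1) (D p.2) =
  (F 1 1 * m 1 1 + F 1 2 * m 1 2 + F 1 3 * m 1 3 + F 1 4 * m 1 4 + F 2 2 * m 2 2
  + F 2 3 * m 2 3 + F 2 4 * m 2 4 + F 3 3 * m 3 3 + F 3 4 * m 3 4 + F 4 4 * m 4 4)%N.
Proof.
move=> Fs.
have pw : forall u v : 'I_n, F (D u) (D v) = let a := D u in let b := D v in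
  (cls 1 1 a b * F 1 1 + cls 1 2 a b * F 1 2 + cls 1 3 a b * F 1 3 + cls 1 4 a b * F 1 4
  + cls 2 2 a b * F 2 2 + cls 2 3 a b * F 2 3 + cls 2 4 a b * F 2 4 + cls 3 3 a b * F 3 3
  + cls 3 4 a b * F 3 4 + cls 4 4 a b * F 4 4)%N.
  move=> u v /=; move: (deg_gt0 u) (deg_le4 u) (deg_gt0 v) (deg_le4 v).
  move: (D u) (D v) => [|[|[|[|[|a]]]]] [|[|[|[|[|b]]]]] // _ _ _ _; rewrite /cls /= ?mul1n ?mul0n ?addn0 ?add0n //.
under eq_bigr => p _ do rewrite pw /=.
rewrite !big_split /= -!big_distrl /= /m !medgesE.
by rewrite !(mulnC (F _ _)).
Qed.

Lemma sum_if_R (R : realType) (c : 'I_n * 'I_n -> bool) (X : R) :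
  (\sum_(p in E) (if c p then X else 0) = (\sum_(p in E) (c p : nat))%N%:R * X)%R.
Proof.
rewrite natr_sum big_distrl /=; apply: eq_bigr => p _; case: (c p) => /=.
  by rewrite mul1r. by rewrite mul0r.
Qed.

Lemma sum_cls_R (R : realType) (F : nat -> nat -> R) : (forall a b, F a b = F b a) ->
  (\sum_(p in E) F (D p.1) (D p.2))%R =
  ((m 1 1)%:R * F 1 1 + (m 1 2)%:R * F 1 2 + (m 1 3)%:R * F 1 3 + (m 1 4)%:R * F 1 4
  + (m 2 2)%:R * F 2 2 + (m 2 3)%:R * F 2 3 + (m 2 4)%:R * F 2 4 + (m 3 3)%:R * F 3 3
  + (m 3 4)%:R * F 3 4 + (m 4 4)%:R * F 4 4)%R.
Proof.
move=> Fs.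
have pw : forall u v : 'I_n, F (D u) (D v) = let a := D u in let b := D v in
  ((if cls 1 1 a b then F 1 1 else 0) + (if cls 1 2 a b then F 1 2 else 0)
  + (if cls 1 3 a b then F 1 3 else 0) + (if cls 1 4 a b then F 1 4 else 0)
  + (if cls 2 2 a b then F 2 2 else 0) + (if cls 2 3 a b then F 2 3 else 0)
  + (if cls 2 4 a b then F 2 4 else 0) + (if cls 3 3 a b then F 3 3 else 0)
  + (if cls 3 4 a b then F 3 4 else 0) + (if cls 4 4 a b then F 4 4 else 0))%R.
  move=> u v /=; move: (deg_gt0 u) (deg_le4 u) (deg_gt0 v) (deg_le4 v).
  move: (D u) (D v) => [|[|[|[|[|a]]]]] [|[|[|[|[|b]]]]] // _ _ _ _;
  rewrite /cls /= ?add0r ?addr0 //.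
under eq_bigr => p _ do rewrite pw /=.
by rewrite !big_split /= !sum_if_R /m !medgesE.
Qed.

Lemma handshake d :
  (\sum_(p in E) ((D p.1 == d) + (D p.2 == d)) = d * nv e d)%N.
Proof.
case: He => [[sym irr] _ _ _].
set f := fun p : 'I_n * 'I_n => ((e p.1 p.2 && (D p.1 == d)) : nat).
have A : (\sum_p f p = d * nv e d)%N.
  rewrite /f -(pair_big xpredT xpredT (fun u v => ((e u v && (D u == d)) : nat))) /=.
  rewrite /nv card_setP big_distrr /=; apply: eq_bigr => u _.
  case: eqP => [Hd|_] /=.
    under eq_bigr => v _ do rewrite andbT.
    by rewrite -Hd /deg card_setP muln1.
  by rewrite /= muln0 big1 // => v _; rewrite andbF.
have swap_inj : injective (fun p : 'I_n * 'I_n => (p.2, p.1)).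
  by move=> [a b] [c d'] /= [-> ->].
have B : (\sum_p f p = \sum_(p : 'I_n * 'I_n) (if (p.1 < p.2)%N then f p else 0)
          + \sum_(p : 'I_n * 'I_n) (if ~~ (p.1 < p.2)%N then f p else 0))%N.
  by rewrite -big_split /=; apply: eq_bigr => p _; case: (p.1 < p.2)%N; rewrite ?addn0 ?add0n.
rewrite -A B big_split /=; congr (_ + _)%N.
  rewrite [LHS]big_mkcond /=; apply: eq_bigr => p _; rewrite inE /f.
  by case: (p.1 < p.2); case: (e p.1 p.2).
rewrite (reindex_inj swap_inj) /= [LHS]big_mkcond /=; apply: eq_bigr => [[a b]] _ /=; rewrite inE /f /=.
rewrite (sym b a).
case: (ltngtP a b) => [hab|hab|hab] /=.
- by [].
- by case: (e a b).
- by move/val_inj: hab => ->; rewrite irr.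
Qed.

Lemma nv_sum : (nv e 1 + nv e 2 + nv e 3 + nv e 4 = n)%N.
Proof.
rewrite /nv !card_setP -!big_split /=.
rewrite -[RHS]card_ord -sum1_card; apply: eq_bigr => u _.
move: (deg_gt0 u) (deg_le4 u); move: (D u) => [|[|[|[|[|a]]]]] //.
Qed.

Lemma msum : (m 1 1 + m 1 2 + m 1 3 + m 1 4 + m 2 2 + m 2 3 + m 2 4 + m 3 3 + m 3 4 + m 4 4 = n)%N.
Proof.
have := sum_cls_nat (F := fun _ _ => 1%N) (fun _ _ => erefl).
rewrite !mul1n sum1_card => <-.
by case: He => _ _ hE _; rewrite -[in RHS]hE.
Qed.

Lemma medges_out i j : (i == 0%N) || (j == 0%N) || (4 < i)%N || (4 < j)%N -> m i j = 0%N.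
Proof.
move=> H; rewrite /m medgesE big1 // => p _.
move: (deg_gt0 p.1) (deg_le4 p.1) (deg_gt0 p.2) (deg_le4 p.2).
rewrite /cls; move: (D p.1) (D p.2) => a b; case: eqP => [->|_]; case: eqP => [->|_] /=; lia.
Qed.

Lemma deg1_nb u v w : D u = 1%N -> e u v -> e u w -> w = v.
Proof.
rewrite /deg => /eqP /cards1P [z hz] huv huw.
have : v \in [set x | e u x] by rewrite inE.
have : w \in [set x | e u x] by rewrite inE.
by rewrite hz !inE => /eqP -> /eqP ->.
Qed.

Lemma m11_0 : m 1 1 = 0%N.
Proof.
case: He => [[sym irr] conn _ _].
rewrite /m medgesE big1 // => p; rewrite inE => /andP [hlt hp].
suff -> : cls 1 1 (D p.1) (D p.2) = false by [].
rewrite /cls orbb; apply/negP => /andP [/eqP h1 /eqP h2].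
pose a := [set p.1; p.2].
have cl : closed e (mem a).
  have hp' : e p.2 p.1 by rewrite sym.
  move=> x y exy /=; rewrite !inE.
  have eyx : e y x by rewrite sym.
  apply/idP/idP.
  - case/orP => /eqP hx; subst x.
    + by rewrite (deg1_nb h1 hp exy) eqxx orbT.
    + by rewrite (deg1_nb h2 hp' exy) eqxx.
  - case/orP => /eqP hy; subst y.
    + by rewrite (deg1_nb h1 hp eyx) eqxx orbT.
    + by rewrite (deg1_nb h2 hp' eyx) eqxx.
have [w hw] : exists w : 'I_n, (w != p.1) && (w != p.2).
  have h0 : (0 < n)%N by lia.
  have h1' : (1 < n)%N by lia.
  have h2' : (2 < n)%N by lia.
  case: (boolP ((Ordinal h0 != p.1) && (Ordinal h0 != p.2))) => [H|H]; first by exists (Ordinal h0).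
  case: (boolP ((Ordinal h1' != p.1) && (Ordinal h1' != p.2))) => [H'|H']; first by exists (Ordinal h1').
  exists (Ordinal h2').
  move: H H'; rewrite -!val_eqE /=.
  move: (nat_of_ord p.1) (nat_of_ord p.2) => x y; lia.
have := closed_connect cl (conn p.1 w).
by rewrite /= !inE eqxx /= (negbTE (proj1 (andP hw))) (negbTE (proj2 (andP hw))).
Qed.

Lemma mdd0 d : (nv e d <= 1)%N -> m d d = 0%N.
Proof.
move=> hnv; rewrite /m /medges; apply/eqP; rewrite cards_eq0; apply/eqP/setP => p.
rewrite !inE orbb; apply/negP => /andP [/andP [lp _] /andP [a1 a2]].
have := card2_le (S := [set u | D u == d]) (x := p.1) (y := p.2).
rewrite !inE a1 a2 -val_eqE /= neq_ltn lp /= => /(_ isT isT isT).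
by rewrite /nv in hnv => /leq_trans /(_ hnv).
Qed.

Lemma mdd1 d : (nv e d <= 2)%N -> (m d d <= 1)%N.
Proof.
move=> hnv; rewrite /m /medges; apply/card_le1_eqP => -[p1 p2] [q1 q2].
rewrite !inE !orbb /= => /andP [/andP [lp _] /andP [a1 a2]] /andP [/andP [lq _] /andP [b1 b2]].
set S := [set u | D u == d].
have inS : forall u, (D u == d) -> u \in S by move=> u; rewrite inE.
have c3 := fun x y z hx hy hz => card3_le (S := S) (x := x) (y := y) (z := z) (inS _ hx) (inS _ hy) (inS _ hz).
have pne : p1 != p2 by rewrite -val_eqE /= neq_ltn lp.
have h1 : (q1 == p1) || (q1 == p2).
  apply/negPn/negP; rewrite negb_or => /andP [n1 n2].
  by move: (c3 _ _ _ a1 a2 b1 pne n1 n2) => /leq_trans /(_ hnv).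
have h2 : (q2 == p1) || (q2 == p2).
  apply/negPn/negP; rewrite negb_or => /andP [n1 n2].
  by move: (c3 _ _ _ a1 a2 b2 pne n1 n2) => /leq_trans /(_ hnv).
move: h1 h2 lp lq; case/orP => /eqP ->; case/orP => /eqP ->; rewrite ?ltnn // => lp lq.
lia.
Qed.

Lemma hs1 : (m 1 2 + m 1 3 + m 1 4 = nv e 1)%N.
Proof.
have := handshake 1; rewrite (sum_cls_nat (F := fun a b => ((a == 1) + (b == 1))%N)) /=.
  by rewrite m11_0 => H; lia.
by move=> a b; apply: addnC.
Qed.
Lemma hs2 : (m 1 2 + 2 * m 2 2 + m 2 3 + m 2 4 = 2 * nv e 2)%N.
Proof.
have := handshake 2; rewrite (sum_cls_nat (F := fun a b => ((a == 2) + (b == 2))%N)) /=.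
  by move=> H; lia.
by move=> a b; apply: addnC.
Qed.
Lemma hs3 : (m 1 3 + m 2 3 + 2 * m 3 3 + m 3 4 = 3 * nv e 3)%N.
Proof.
have := handshake 3; rewrite (sum_cls_nat (F := fun a b => ((a == 3) + (b == 3))%N)) /=.
  by move=> H; lia.
by move=> a b; apply: addnC.
Qed.
Lemma hs4 : (m 1 4 + m 2 4 + m 3 4 + 2 * m 4 4 = 4 * nv e 4)%N.
Proof.
have := handshake 4; rewrite (sum_cls_nat (F := fun a b => ((a == 4) + (b == 4))%N)) /=.
  by move=> H; lia.
by move=> a b; apply: addnC.
Qed.
End Comb.
Local Open Scope ring_scope.

Lemma keylin (R : realType) (x12 x13 x14 x22 x23 x24 x33 x34 x44 n1 n2 n3 n4 N
  y12 y13 y14 y23 y24 y33 y34 y44 C : R) :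
  (((1*10+0)*10+0)*10+0) * C <= (((3*10+3)*10+4)*10+5) ->
  -(((5*10+9)*10+3)) * x12 <= (((1*10+0)*10+0)*10+0) * y12 -> ((3*10+3)*10+3) * x13 <= (((1*10+0)*10+0)*10+0) * y13 -> (((1*10+2)*10+9)*10+4) * x14 <= (((1*10+0)*10+0)*10+0) * y14 ->
  ((7*10+7)*10+6) * x23 <= (((1*10+0)*10+0)*10+0) * y23 -> (((1*10+6)*10+4)*10+3) * x24 <= (((1*10+0)*10+0)*10+0) * y24 -> (((1*10+4)*10+1)*10+3) * x33 <= (((1*10+0)*10+0)*10+0) * y33 ->
  (((2*10+1)*10+7)*10+1) * x34 <= (((1*10+0)*10+0)*10+0) * y34 -> (((2*10+8)*10+2)*10+7) * x44 <= (((1*10+0)*10+0)*10+0) * y44 ->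
  0 <= x12 -> 0 <= x13 -> 0 <= x14 -> 0 <= x22 -> 0 <= x23 -> 0 <= x24 ->
  0 <= x33 -> 0 <= x34 -> 0 <= x44 ->
  x12 + x13 + x14 = n1 ->
  x12 + 2*x22 + x23 + x24 = 2*n2 ->
  x13 + x23 + 2*x33 + x34 = 3*n3 ->
  x14 + x24 + x34 + 2*x44 = 4*n4 ->
  n1 + n2 + n3 + n4 = N ->
  x12 + x13 + x14 + x22 + x23 + x24 + x33 + x34 + x44 = N ->
  (1 <= n4 \/ 3 <= n3 \/ (n4 = 0 /\ n3 = 2 /\ x33 <= 1 /\ (1 <= x13 \/ x33 = 0))) ->
  C < y12 + y13 + y14 + y23 + y24 + y33 + y34 + y44.
Proof.
do 24 move=> ?; move=> hc.
case: hc => [hc|[hc|[hc1 [hc2 [hc3 [hc4|hc4]]]]]]; lra.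
Qed.

Lemma ylb (R : realType) (x w v c k : R) : 0 <= x -> c <= k * (w - v) -> c * x <= k * (x * (w - v)).
Proof. move=> px hc; rewrite mulrCA mulrC; exact: ler_wpM2l. Qed.

Lemma key (R : realType) (x11 x12 x13 x14 x22 x23 x24 x33 x34 x44 n1 n2 n3 n4 N
  w11 w12 w13 w14 w22 w23 w24 w33 w34 w44 : R) :
  (((2*10+2)*10+3)*10+6) <= (((1*10+0)*10+0)*10+0) * w12 -> (((1*10+0)*10+0)*10+0) * w12 <= (((2*10+2)*10+3)*10+7) -> (((3*10+1)*10+6)*10+2) <= (((1*10+0)*10+0)*10+0) * w13 ->
  (((4*10+1)*10+2)*10+3) <= (((1*10+0)*10+0)*10+0) * w14 -> (((2*10+8)*10+2)*10+8) <= (((1*10+0)*10+0)*10+0) * w22 -> (((1*10+0)*10+0)*10+0) * w22 <= (((2*10+8)*10+2)*10+9) -> (((3*10+6)*10+0)*10+5) <= (((1*10+0)*10+0)*10+0) * w23 -> (((1*10+0)*10+0)*10+0) * w23 <= (((3*10+6)*10+0)*10+6) ->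
  (((4*10+4)*10+7)*10+2) <= (((1*10+0)*10+0)*10+0) * w24 -> (((4*10+2)*10+4)*10+2) <= (((1*10+0)*10+0)*10+0) * w33 -> (((1*10+0)*10+0)*10+0) * w33 <= (((4*10+2)*10+4)*10+3) -> 5 <= w34 -> (((5*10+6)*10+5)*10+6) <= (((1*10+0)*10+0)*10+0) * w44 ->
  0 <= x12 -> 0 <= x13 -> 0 <= x14 -> 0 <= x22 -> 0 <= x23 -> 0 <= x24 ->
  0 <= x33 -> 0 <= x34 -> 0 <= x44 -> x11 = 0 ->
  x12 + x13 + x14 = n1 ->
  x12 + 2*x22 + x23 + x24 = 2*n2 ->
  x13 + x23 + 2*x33 + x34 = 3*n3 ->
  x14 + x24 + x34 + 2*x44 = 4*n4 ->
  n1 + n2 + n3 + n4 = N ->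
  x11 + x12 + x13 + x14 + x22 + x23 + x24 + x33 + x34 + x44 = N ->
  (1 <= n4 \/ 3 <= n3 \/ (n4 = 0 /\ n3 = 2 /\ x33 <= 1 /\ (1 <= x13 \/ x33 = 0))) ->
  2*w12 + 4*w23 + w33 + (N - 7)*w22 <
  x11*w11 + x12*w12 + x13*w13 + x14*w14 + x22*w22 + x23*w23 + x24*w24 + x33*w33 + x34*w34 + x44*w44.
Proof.
move=> b12 b12' b13 b14 b22 b22' b23 b23' b24 b33 b33' b34 b44.
move=> p12 p13 p14 p22 p23 p24 p33 p34 p44 z11 h1 h2 h3 h4 hN hx hc.
have hx22 : x22 = N - (x11 + x12 + x13 + x14 + x23 + x24 + x33 + x34 + x44).
  by rewrite -hx; ring.
have G : x11*w11 + x12*w12 + x13*w13 + x14*w14 + x22*w22 + x23*w23 + x24*w24 + x33*w33 + x34*w34 + x44*w44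
  = N * w22 + (x12*(w12-w22) + x13*(w13-w22) + x14*(w14-w22) + x23*(w23-w22) + x24*(w24-w22)
      + x33*(w33-w22) + x34*(w34-w22) + x44*(w44-w22)).
  by rewrite hx22 z11; ring.
rewrite G.
have y12 : -(((5*10+9)*10+3)) * x12 <= (((1*10+0)*10+0)*10+0) * (x12 * (w12 - w22)) by apply: ylb => //; lra.
have y13 : ((3*10+3)*10+3) * x13 <= (((1*10+0)*10+0)*10+0) * (x13 * (w13 - w22)) by apply: ylb => //; lra.
have y14 : (((1*10+2)*10+9)*10+4) * x14 <= (((1*10+0)*10+0)*10+0) * (x14 * (w14 - w22)) by apply: ylb => //; lra.
have y23 : ((7*10+7)*10+6) * x23 <= (((1*10+0)*10+0)*10+0) * (x23 * (w23 - w22)) by apply: ylb => //; lra.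
have y24 : (((1*10+6)*10+4)*10+3) * x24 <= (((1*10+0)*10+0)*10+0) * (x24 * (w24 - w22)) by apply: ylb => //; lra.
have y33 : (((1*10+4)*10+1)*10+3) * x33 <= (((1*10+0)*10+0)*10+0) * (x33 * (w33 - w22)) by apply: ylb => //; lra.
have y34 : (((2*10+1)*10+7)*10+1) * x34 <= (((1*10+0)*10+0)*10+0) * (x34 * (w34 - w22)) by apply: ylb => //; lra.
have y44 : (((2*10+8)*10+2)*10+7) * x44 <= (((1*10+0)*10+0)*10+0) * (x44 * (w44 - w22)) by apply: ylb => //; lra.
have hC : (((1*10+0)*10+0)*10+0) * (2*w12 + 4*w23 + w33 - 7*w22) <= (((3*10+3)*10+4)*10+5) by lra.
have h1' : x12 + x13 + x14 = n1 by [].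
have hx' : x12 + x13 + x14 + x22 + x23 + x24 + x33 + x34 + x44 = N by rewrite -hx z11 add0r.
have K := keylin hC y12 y13 y14 y23 y24 y33 y34 y44 p12 p13 p14 p22 p23 p24 p33 p34 p44 h1' h2 h3 h4 hN hx' hc.
move: K; set Y := (x12 * _ + _ + _ + _ + _ + _ + _ + _) => K.
have -> : (N - 7) * w22 = N * w22 - 7 * w22 by ring.
lra.
Qed.


Local Open Scope ring_scope.

Lemma sqrt_lo (R : realType) (a : nat) (L K : R) : 0 <= K -> L^+2 <= K^+2 * a%:R -> L <= K * Num.sqrt a%:R.
Proof.
move=> hK h.
have hs : 0 <= K * Num.sqrt a%:R by rewrite mulr_ge0 ?sqrtr_ge0.
case: (lerP L 0) => hL; first exact: le_trans hL hs.
have -> : K * Num.sqrt a%:R = Num.sqrt (K^+2 * a%:R).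
  by rewrite sqrtrM ?sqrtr_sqr ?ger0_norm // exprn_ge0.
rewrite -(ger0_norm (ltW hL)) -sqrtr_sqr ler_sqrt //.
by rewrite mulr_ge0 ?exprn_ge0.
Qed.

Lemma sqrt_hi (R : realType) (a : nat) (U K : R) : 0 <= K -> 0 <= U -> K^+2 * a%:R <= U^+2 -> K * Num.sqrt a%:R <= U.
Proof.
move=> hK hU h.
have -> : K * Num.sqrt a%:R = Num.sqrt (K^+2 * a%:R).
  by rewrite sqrtrM ?sqrtr_sqr ?ger0_norm // exprn_ge0.
by rewrite -(ger0_norm hU) -sqrtr_sqr ler_sqrt // exprn_ge0.
Qed.

Definition w (R : realType) (i j : nat) : R := Num.sqrt ((i ^ 2 + j ^ 2)%N%:R).

Lemma w34E (R : realType) : w R 3 4 = 5.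
Proof.
rewrite /w (_ : (3 ^ 2 + 4 ^ 2)%N = (5 ^ 2)%N) // natrX sqrtr_sqr ger0_norm //.
Qed.

Lemma wlo11 (R : realType) : (((1*10+4)*10+1)*10+4) <= (((1*10+0)*10+0)*10+0) * w R 1 1.
Proof. rewrite /w (_ : (1 ^ 2 + 1 ^ 2)%N = 2) //; apply: sqrt_lo; rewrite ?expr2; lra. Qed.

Lemma wlo12 (R : realType) : (((2*10+2)*10+3)*10+6) <= (((1*10+0)*10+0)*10+0) * w R 1 2.
Proof. rewrite /w (_ : (1 ^ 2 + 2 ^ 2)%N = 5) //; apply: sqrt_lo; rewrite ?expr2; lra. Qed.

Lemma whi12 (R : realType) : (((1*10+0)*10+0)*10+0) * w R 1 2 <= (((2*10+2)*10+3)*10+7).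
Proof. rewrite /w (_ : (1 ^ 2 + 2 ^ 2)%N = 5) //; apply: sqrt_hi; rewrite ?expr2; lra. Qed.

Lemma wlo13 (R : realType) : (((3*10+1)*10+6)*10+2) <= (((1*10+0)*10+0)*10+0) * w R 1 3.
Proof. rewrite /w (_ : (1 ^ 2 + 3 ^ 2)%N = 10) //; apply: sqrt_lo; rewrite ?expr2; lra. Qed.

Lemma whi13 (R : realType) : (((1*10+0)*10+0)*10+0) * w R 1 3 <= (((3*10+1)*10+6)*10+3).
Proof. rewrite /w (_ : (1 ^ 2 + 3 ^ 2)%N = 10) //; apply: sqrt_hi; rewrite ?expr2; lra. Qed.

Lemma wlo14 (R : realType) : (((4*10+1)*10+2)*10+3) <= (((1*10+0)*10+0)*10+0) * w R 1 4.
Proof. rewrite /w (_ : (1 ^ 2 + 4 ^ 2)%N = 17) //; apply: sqrt_lo; rewrite ?expr2; lra. Qed.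

Lemma wlo22 (R : realType) : (((2*10+8)*10+2)*10+8) <= (((1*10+0)*10+0)*10+0) * w R 2 2.
Proof. rewrite /w (_ : (2 ^ 2 + 2 ^ 2)%N = 8) //; apply: sqrt_lo; rewrite ?expr2; lra. Qed.

Lemma whi22 (R : realType) : (((1*10+0)*10+0)*10+0) * w R 2 2 <= (((2*10+8)*10+2)*10+9).
Proof. rewrite /w (_ : (2 ^ 2 + 2 ^ 2)%N = 8) //; apply: sqrt_hi; rewrite ?expr2; lra. Qed.

Lemma wlo23 (R : realType) : (((3*10+6)*10+0)*10+5) <= (((1*10+0)*10+0)*10+0) * w R 2 3.
Proof. rewrite /w (_ : (2 ^ 2 + 3 ^ 2)%N = 13) //; apply: sqrt_lo; rewrite ?expr2; lra. Qed.

Lemma whi23 (R : realType) : (((1*10+0)*10+0)*10+0) * w R 2 3 <= (((3*10+6)*10+0)*10+6).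
Proof. rewrite /w (_ : (2 ^ 2 + 3 ^ 2)%N = 13) //; apply: sqrt_hi; rewrite ?expr2; lra. Qed.

Lemma wlo24 (R : realType) : (((4*10+4)*10+7)*10+2) <= (((1*10+0)*10+0)*10+0) * w R 2 4.
Proof. rewrite /w (_ : (2 ^ 2 + 4 ^ 2)%N = 20) //; apply: sqrt_lo; rewrite ?expr2; lra. Qed.

Lemma wlo33 (R : realType) : (((4*10+2)*10+4)*10+2) <= (((1*10+0)*10+0)*10+0) * w R 3 3.
Proof. rewrite /w (_ : (3 ^ 2 + 3 ^ 2)%N = 18) //; apply: sqrt_lo; rewrite ?expr2; lra. Qed.

Lemma whi33 (R : realType) : (((1*10+0)*10+0)*10+0) * w R 3 3 <= (((4*10+2)*10+4)*10+3).
Proof. rewrite /w (_ : (3 ^ 2 + 3 ^ 2)%N = 18) //; apply: sqrt_hi; rewrite ?expr2; lra. Qed.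

Lemma wlo44 (R : realType) : (((5*10+6)*10+5)*10+6) <= (((1*10+0)*10+0)*10+0) * w R 4 4.
Proof. rewrite /w (_ : (4 ^ 2 + 4 ^ 2)%N = 32) //; apply: sqrt_lo; rewrite ?expr2; lra. Qed.


Lemma sombor_eq (R : realType) n (e : rel 'I_n) : chem_unicyclic e -> (2 < n)%N ->
  sombor R e = (m e 1 1)%:R * w R 1 1 + (m e 1 2)%:R * w R 1 2 + (m e 1 3)%:R * w R 1 3
  + (m e 1 4)%:R * w R 1 4 + (m e 2 2)%:R * w R 2 2 + (m e 2 3)%:R * w R 2 3
  + (m e 2 4)%:R * w R 2 4 + (m e 3 3)%:R * w R 3 3 + (m e 3 4)%:R * w R 3 4
  + (m e 4 4)%:R * w R 4 4.
Proof.
move=> He Hn; rewrite /sombor; apply: (sum_cls_R He Hn (F := w R)).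
by move=> a b; rewrite /w addnC.
Qed.

Lemma key_nat (R : realType) (a11 a12 a13 a14 a22 a23 a24 a33 a34 a44 v1 v2 v3 v4 n : nat) :
  a11 = 0%N -> (a12 + a13 + a14 = v1)%N -> (a12 + 2 * a22 + a23 + a24 = 2 * v2)%N ->
  (a13 + a23 + 2 * a33 + a34 = 3 * v3)%N -> (a14 + a24 + a34 + 2 * a44 = 4 * v4)%N ->
  (v1 + v2 + v3 + v4 = n)%N ->
  (a11 + a12 + a13 + a14 + a22 + a23 + a24 + a33 + a34 + a44 = n)%N ->
  ((1 <= v4) \/ (3 <= v3) \/ (v4 = 0 /\ v3 = 2 /\ a33 <= 1 /\ (1 <= a13 \/ a33 = 0)))%N ->
  2 * w R 1 2 + 4 * w R 2 3 + w R 3 3 + (n%:R - 7) * w R 2 2 <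
  a11%:R * w R 1 1 + a12%:R * w R 1 2 + a13%:R * w R 1 3 + a14%:R * w R 1 4
  + a22%:R * w R 2 2 + a23%:R * w R 2 3 + a24%:R * w R 2 4 + a33%:R * w R 3 3
  + a34%:R * w R 3 4 + a44%:R * w R 4 4.
Proof.
move=> z11 h1 h2 h3 h4 hN hx hc.
have c := fun (a b : nat) (h : a = b) => congr1 (fun k : nat => k%:R : R) h.
have b34 : 5 <= w R 3 4 by rewrite w34E.
move: (c _ _ z11) (c _ _ h1) (c _ _ h2) (c _ _ h3) (c _ _ h4) (c _ _ hN) (c _ _ hx).
rewrite /= !natrD => z11' h1' h2' h3' h4' hN' hx'.
have e2 : a12%:R + 2 * a22%:R + a23%:R + a24%:R = 2 * v2%:R :> R by move: h2'; clear; lra.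
have e3 : a13%:R + a23%:R + 2 * a33%:R + a34%:R = 3 * v3%:R :> R by move: h3'; clear; lra.
have e4 : a14%:R + a24%:R + a34%:R + 2 * a44%:R = 4 * v4%:R :> R by move: h4'; clear; lra.
apply: (key (w R 1 1) (wlo12 R) (whi12 R) (wlo13 R) (wlo14 R) (wlo22 R) (whi22 R) (wlo23 R) (whi23 R)
   (wlo24 R) (wlo33 R) (whi33 R) b34 (wlo44 R) (ler0n _ _) (ler0n _ _) (ler0n _ _) (ler0n _ _) (ler0n _ _) (ler0n _ _)
   (ler0n _ _) (ler0n _ _) (ler0n _ _) z11' h1' e2 e3 e4 hN' hx').
case: hc => [hc|[hc|[hc1 [hc2 [hc3 hc4]]]]].
- by left; rewrite (ler_nat R 1).
- by right; left; rewrite (ler_nat R 3).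
- right; right; rewrite hc1 hc2; split => //; split => //; split; first by rewrite (ler_nat R _ 1).
  case: hc4 => [hc4|hc4]; [left; rewrite (ler_nat R 1) // | right; rewrite hc4 //].
Qed.

Lemma order_patterns (R : realType) (N : R) :
  let S := fun x11 x12 x13 x14 x22 x23 x24 x33 x34 x44 : R =>
    x11 * w R 1 1 + x12 * w R 1 2 + x13 * w R 1 3 + x14 * w R 1 4
  + x22 * w R 2 2 + x23 * w R 2 3 + x24 * w R 2 4 + x33 * w R 3 3
  + x34 * w R 3 4 + x44 * w R 4 4 in
  [/\ S 0 0 0 0 N 0 0 0 0 0 < S 0 1 0 0 (N - 4) 3 0 0 0 0,
      S 0 1 0 0 (N - 4) 3 0 0 0 0 < S 0 0 1 0 (N - 3) 2 0 0 0 0 &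
      S 0 0 1 0 (N - 3) 2 0 0 0 0 < 2 * w R 1 2 + 4 * w R 2 3 + w R 3 3 + (N - 7) * w R 2 2].
Proof.
move=> S; rewrite /S.
have := wlo12 R; have := whi12 R; have := wlo13 R; have := whi13 R;
have := wlo22 R; have := whi22 R; have := wlo23 R; have := whi23 R;
have := wlo33 R; have := whi33 R.
move=> *; split; lra.
Qed.

Ltac solve_alpha CG hn3 :=
  let i := fresh "i" in let j := fresh "j" in let hij := fresh "hij" in
  move=> i j hij; case: i j hij => [|[|[|[|[|i]]]]] [|[|[|[|[|j]]]]] //= hij;
  try (apply: (medges_out CG hn3); lia); lia.

Theorem theorem3p6 (R : realType) (n : nat) (hn : (7 <= n)%N)
  (G1 G2 G3 G4 G : rel 'I_n) :
  chem_unicyclic G1 -> alpha1 G1 ->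
  chem_unicyclic G2 -> alpha3 G2 ->
  chem_unicyclic G3 -> alpha2 G3 ->
  chem_unicyclic G4 -> alpha9 G4 ->
  chem_unicyclic G ->
  ~ (alpha1 G \/ alpha2 G \/ alpha3 G \/ alpha9 G) ->
  [/\ sombor R G1 < sombor R G2, sombor R G2 < sombor R G3,
      sombor R G3 < sombor R G4 & sombor R G4 < sombor R G].
Proof.
move=> C1 A1 C2 A3 C3 A2 C4 A9 CG hnot.
have hn3 : (2 < n)%N by lia.
have [o1 o2 o3] := order_patterns (n%:R : R).
rewrite (sombor_eq R C1 hn3) (sombor_eq R C2 hn3) (sombor_eq R C3 hn3) (sombor_eq R C4 hn3)
  (sombor_eq R CG hn3).
have z11 := m11_0 CG hn3. have h1 := hs1 CG hn3. have h2 := hs2 CG hn3.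
have h3 := hs3 CG hn3. have h4 := hs4 CG hn3. have hv := nv_sum CG hn3.
have hm := msum CG hn3.
rewrite /m in z11 h1 h2 h3 h4 hm *.
case: A1 => _ A1; case: A3 => _ _ _ _ A3; case: A2 => _ _ _ _ A2; case: A9 => _ _ _ _ A9.
rewrite !A1 // !A2 // !A3 // !A9 //=.
rewrite !natrB ?(leq_trans _ hn) //.
have fin : 2 * w R 1 2 + 4 * w R 2 3 + w R 3 3 + (n%:R - 7) * w R 2 2 <
  (medges G 1 1)%:R * w R 1 1 + (medges G 1 2)%:R * w R 1 2 + (medges G 1 3)%:R * w R 1 3
  + (medges G 1 4)%:R * w R 1 4 + (medges G 2 2)%:R * w R 2 2 + (medges G 2 3)%:R * w R 2 3
  + (medges G 2 4)%:R * w R 2 4 + (medges G 3 3)%:R * w R 3 3 + (medges G 3 4)%:R * w R 3 4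
  + (medges G 4 4)%:R * w R 4 4.
  case: (ltnP 0 (nv G 4)) => H4.
    exact: (key_nat R z11 h1 h2 h3 h4 hv hm (or_introl H4)).
  case: (ltnP 2 (nv G 3)) => H3.
    exact: (key_nat R z11 h1 h2 h3 h4 hv hm (or_intror (or_introl H3))).
  have [v30|[v31|v32]] : nv G 3 = 0%N \/ nv G 3 = 1%N \/ nv G 3 = 2%N by lia.
  - exfalso; apply: hnot; left; split; first by lia.
    solve_alpha CG hn3.
  - have m33 : medges G 3 3 = 0%N by have := @mdd0 _ G 3; rewrite /m v31; apply.
    have [c13|c13] : medges G 1 3 = 1%N \/ medges G 1 3 = 0%N by lia.
    + exfalso; apply: hnot; right; left; split; try lia.
      solve_alpha CG hn3.
    + exfalso; apply: hnot; right; right; left; split; try lia.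
      solve_alpha CG hn3.
  - have m33 : (medges G 3 3 <= 1)%N by have := @mdd1 _ G hn3 3; rewrite /m v32; apply.
    case: (boolP ((medges G 3 3 == 1%N) && (medges G 1 3 == 0%N))) => [/andP [/eqP c33 /eqP c13]|hh].
    + exfalso; apply: hnot; right; right; right; split; try lia.
      solve_alpha CG hn3.
    + apply: (key_nat R z11 h1 h2 h3 h4 hv hm); right; right.
      split; first by lia. split; first by lia. split; first by [].
      move: hh; case: eqP => [->|?]; case: eqP => [->|?] //= _; lia.
split; lra.
Qed.
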